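(* Let $\phi:\mathbb{R}^d\to\mathbb{R}^k$ be a differentiable feature map with $\sup_{\boldsymbol{x}}\|\phi(\boldsymbol{x})\|_2\le B$ and $\sup_{\boldsymbol{x}}\|J_\phi(\boldsymbol{x})\|_F\le L$, where $J_\phi(\boldsymbol{x})\in\mathbb{R}^{k\times d}$ is the Jacobian. Let $\Lambda>0$ and define $$\mathcal{F}_{\mathrm{unc}} = \{\boldsymbol{x}\mapsto \boldsymbol{W}\phi(\boldsymbol{x}) : \boldsymbol{W}\in\mathbb{R}^{d\times k},\ \|\boldsymbol{W}\|_F\le\Lambda\},\qquad \mathcal{F}_{\mathrm{cons}} = \{\boldsymbol{x}\mapsto J_\phi(\boldsymbol{x})^\top\boldsymbol{w} : \boldsymbol{w}\in\mathbb{R}^k,\ \|\boldsymbol{w}\|_2\le\Lambda\}$$ (the latter being the gradients of the potentials $\boldsymbol{x}\mapsto\boldsymbol{w}^\top\phi(\boldsymbol{x})$). For a sample $S=\{\boldsymbol{x}_1,\dots,\boldsymbol{x}_n\}\subset\mathbb{R}^d$ and a class $\mathcal{F}$ of functions $\mathbb{R}^d\to\mathbb{R}^d$, define the empirical Rademacher complexity $$\hat{\mathfrak{R}}_S(\mathcal{F}) = \frac{1}{n}\mathbb{E}_{\boldsymbol{\sigma}}\left[\sup_{f\in\mathcal{F}}\sum_{i=1}^n\langle\boldsymbol{\sigma}_i, f(\boldsymbol{x}_i)\rangle\right],$$ where $\boldsymbol{\sigma}_1,\dots,\boldsymbol{\sigma}_n$ are independent, each uniformly distributed on $\{-1,1\}^d$.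 Then $$\hat{\mathfrak{R}}_S(\mathcal{F}_{\mathrm{unc}})\le\frac{\Lambda B\sqrt{d}}{\sqrt{n}},\qquad \hat{\mathfrak{R}}_S(\mathcal{F}_{\mathrm{cons}})\le\frac{\Lambda L}{\sqrt{n}}.$$ *)

(* Defs.v *)
From HB Require Import structures.
From mathcomp Require Import all_boot all_order all_algebra.
From mathcomp Require Import all_classical all_reals all_analysis.
Set Implicit Arguments. Unset Strict Implicit. Unset Printing Implicit Defensive.
Import Order.TTheory GRing.Theory Num.Theory.
Local Open Scope ring_scope.
Local Open Scope classical_set_scope.

(* Frobenius norm of a matrix (for a row vector this is the Euclidean 2-norm). *)
Definition frob (R : realType) m n (A : 'M[R]_(m, n)) : R :=
  Num.sqrt (\sum_(i < m) \sum_(j < n) A i j ^+ 2).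

(* Paper's Jacobian J_phi(x) in R^{k x d}: (J)_{ij} = d phi_i / d x_j.
   The library's [jacobian] is d x k (row-vector convention), so transpose. *)
Definition Jac (R : realType) d k (phi : 'rV[R]_d -> 'rV[R]_k) (x : 'rV[R]_d)
  : 'M[R]_(k, d) := (jacobian phi x)^T.

(* F_unc: x |-> W phi(x), W in R^{d x k}, ||W||_F <= Lam (as row vectors: phi(x) W^T) *)
Definition F_unc (R : realType) d k (phi : 'rV[R]_d -> 'rV[R]_k) (Lam : R)
  : set ('rV[R]_d -> 'rV[R]_d) :=
  [set f | exists W : 'M[R]_(d, k), frob W <= Lam /\
           f = (fun x => phi x *m W^T)].

(* F_cons: x |-> J_phi(x)^T w, ||w||_2 <= Lam (as row vectors: w^T J_phi(x)) *)
Definition F_cons (R : realType) d k (phi : 'rV[R]_d -> 'rV[R]_k) (Lam : R)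
  : set ('rV[R]_d -> 'rV[R]_d) :=
  [set f | exists w : 'rV[R]_k, frob w <= Lam /\
           f = (fun x => w *m Jac phi x)].

Definition sgnb (R : realType) (b : bool) : R := if b then 1 else -1.

(* The expectation over sigma uniform on ({-1,1}^d)^n is the
   average over all 2^(n d) sign patterns s : {ffun 'I_n * 'I_d -> bool}. *)
Definition emp_rademacher (R : realType) d n (F : set ('rV[R]_d -> 'rV[R]_d))
  (xs : 'I_n -> 'rV[R]_d) : R :=
  n%:R^-1 * ((2 ^ (n * d))%:R^-1 *
    \sum_(s : {ffun 'I_n * 'I_d -> bool})
      sup [set (\sum_(i < n) \sum_(j < d) sgnb R (s (i, j)) * f (xs i) 0 j)
           | f in F]).

(* Main.v *)
Require Import Defs.
From HB Require Import structures.
From mathcomp Require Import all_boot all_order all_algebra.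
From mathcomp Require Import all_classical all_reals all_analysis.
From mathcomp Require Import ring lra.
Import Order.TTheory GRing.Theory Num.Theory.
Local Open Scope ring_scope.
Local Open Scope classical_set_scope.
Set Implicit Arguments. Unset Strict Implicit.

Lemma CS (R : realType) (I : finType) (a b : I -> R) :
  (\sum_i a i * b i) ^+ 2 <= (\sum_i a i ^+ 2) * (\sum_i b i ^+ 2).
Proof.
have H : 0 <= \sum_i \sum_j (a i * b j - a j * b i) ^+ 2.
  by apply: sumr_ge0 => i _; apply: sumr_ge0 => j _; apply: sqr_ge0.
have E : \sum_i \sum_j (a i * b j - a j * b i) ^+ 2 =
   2 * ((\sum_i a i ^+ 2) * (\sum_i b i ^+ 2)) - 2 * (\sum_i a i * b i) ^+ 2.
  transitivity (\sum_i \sum_j (a i ^+ 2 * b j ^+ 2 + b i ^+ 2 * a j ^+ 2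
       - 2 * ((a i * b i) * (a j * b j)))).
    by apply: eq_bigr => i _; apply: eq_bigr => j _; ring.
  under eq_bigr do rewrite sumrB big_split /= -!mulr_sumr.
  rewrite sumrB big_split /= -!mulr_suml -mulr_sumr -mulr_suml expr2.
  ring.
lra.
Qed.

Lemma CSsqrt (R : realType) (I : finType) (a b : I -> R) :
  \sum_i a i * b i <= Num.sqrt (\sum_i a i ^+ 2) * Num.sqrt (\sum_i b i ^+ 2).
Proof.
rewrite -sqrtrM; last by apply: sumr_ge0 => i _; apply: sqr_ge0.
apply: (le_trans (ler_norm _)).
rewrite -sqrtr_sqr ler_sqrt; first exact: CS.
apply: mulr_ge0; by apply: sumr_ge0 => i _; apply: sqr_ge0.
Qed.

Lemma CS2 (R : realType) (I J : finType) (a b : I -> J -> R) :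
  \sum_i \sum_j a i j * b i j <=
  Num.sqrt (\sum_i \sum_j a i j ^+ 2) * Num.sqrt (\sum_i \sum_j b i j ^+ 2).
Proof.
have := CSsqrt (fun p => a p.1 p.2) (fun p => b p.1 p.2).
by rewrite -(pair_bigA _ (fun i j => a i j * b i j)) -(pair_bigA _ (fun i j => a i j ^+ 2)) -(pair_bigA _ (fun i j => b i j ^+ 2)).
Qed.

Lemma sgnbN (R : realType) b : sgnb R (~~ b) = - sgnb R b.
Proof. by case: b; rewrite /sgnb /= ?opprK. Qed.

Lemma sgnb2 (R : realType) b : sgnb R b * sgnb R b = 1.
Proof. by case: b; rewrite /sgnb /= ?mulr1 ?mulrNN ?mulr1. Qed.

Lemma orth (R : realType) (I : finType) (p q : I) : p != q ->
  \sum_(s : {ffun I -> bool}) sgnb R (s p) * sgnb R (s q) = 0.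
Proof.
move=> npq.
pose fl (s : {ffun I -> bool}) : {ffun I -> bool} :=
  [ffun x => if x == p then ~~ s x else s x].
have flK : involutive fl.
  move=> s; apply/ffunP => x; rewrite !ffunE.
  by case: eqP => _ //; rewrite negbK.
have E : \sum_(s : {ffun I -> bool}) sgnb R (s p) * sgnb R (s q) =
   \sum_(s : {ffun I -> bool}) - (sgnb R (s p) * sgnb R (s q)).
  rewrite (reindex_inj (inv_inj flK)); apply: eq_bigr => s _.
  rewrite !ffunE eqxx eq_sym (negbTE npq) sgnbN; ring.
move: E; rewrite sumrN; lra.
Qed.

Lemma rad_sq (R : realType) (I : finType) (c : I -> R) :
  \sum_(s : {ffun I -> bool}) (\sum_p sgnb R (s p) * c p) ^+ 2 =
  #|{ffun I -> bool}|%:R * \sum_p c p ^+ 2.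
Proof.
transitivity (\sum_(s : {ffun I -> bool}) \sum_p \sum_q
   (c p * c q) * (sgnb R (s p) * sgnb R (s q))).
  apply: eq_bigr => s _; rewrite expr2 mulr_suml; apply: eq_bigr => p _.
  rewrite mulr_sumr; apply: eq_bigr => q _; ring.
rewrite exchange_big /=.
rewrite big_distrr /=; apply: eq_bigr => p _.
rewrite exchange_big /= (bigD1 p) //= addrC big1 => [|q nqp]; last first.
  by rewrite -big_distrr /= orth ?mulr0 // eq_sym.
rewrite add0r -big_distrr /=.
under eq_bigr do rewrite sgnb2.
rewrite sumr_const -mulr_natr; ring.
Qed.

Lemma avg_bound (R : realType) (I : finType) (E : {ffun I -> bool} -> set R)
  (G : {ffun I -> bool} -> R) (Lam C : R) :
  (forall s, E s !=set0) -> (forall s x, E s x -> x <= Lam * G s) ->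
  0 <= Lam -> 0 <= C ->
  \sum_s G s ^+ 2 <= #|{ffun I -> bool}|%:R * C ->
  \sum_s sup (E s) <= #|{ffun I -> bool}|%:R * (Lam * Num.sqrt C).
Proof.
move=> ne ub L0 C0 HC.
apply: (le_trans (y := \sum_s Lam * G s)).
  apply: ler_sum => s _; apply: ge_sup => //; exact: ub.
rewrite -big_distrr /= mulrCA ler_wpM2l //.
have := CSsqrt (fun _ : {ffun I -> bool} => 1) G; rewrite /=.
under eq_bigr do rewrite mul1r.
have E1 : \sum_(i : {ffun I -> bool}) (1:R) ^+ 2 = #|{ffun I -> bool}|%:R.
  by under eq_bigr do rewrite expr1n; rewrite sumr_const.
rewrite E1 => H; apply: (le_trans H).
have H2 : Num.sqrt (\sum_s G s ^+ 2) <= Num.sqrt (#|{ffun I -> bool}|%:R * C).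
  by rewrite ler_sqrt // mulr_ge0.

apply: (le_trans (ler_wpM2l (sqrtr_ge0 _) H2)).
by rewrite sqrtrM // mulrA -expr2 sqr_sqrtr.
Qed.

Lemma sum_const_ord (R : realType) m (x : R) : \sum_(i < m) x = m%:R * x.
Proof. by rewrite sumr_const card_ord mulr_natl. Qed.

Lemma pairE (R : realType) (I J : finType) (F : I * J -> R) :
  \sum_p F p = \sum_i \sum_j F (i, j).
Proof. by rewrite pair_bigA; apply: eq_bigr => -[]. Qed.

Lemma sq_le (R : realType) (x y : R) : 0 <= x -> x <= y -> x ^+ 2 <= y ^+ 2.
Proof. move=> x0 xy; rewrite !expr2; apply: ler_pM => //. Qed.

Lemma frob0 (R : realType) m p : frob (0 : 'M[R]_(m, p)) = 0.
Proof.
rewrite /frob big1 ?sqrtr0 // => i _; apply: big1 => j _; rewrite mxE; ring.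
Qed.

Lemma frob_ge0 (R : realType) m p (A : 'M[R]_(m, p)) : 0 <= frob A.
Proof. exact: sqrtr_ge0. Qed.

Lemma frob_sq (R : realType) m p (A : 'M[R]_(m, p)) :
  frob A ^+ 2 = \sum_i \sum_j A i j ^+ 2.
Proof.
rewrite /frob sqr_sqrtr //; apply: sumr_ge0 => i _; apply: sumr_ge0 => j _; exact: sqr_ge0.
Qed.

Lemma unc_part (R : realType) (d k n : nat) (phi : 'rV[R]_d -> 'rV[R]_k)
  (B Lam : R) (xs : 'I_n -> 'rV[R]_d) :
  (forall x, frob (phi x) <= B) -> 0 < Lam -> (0 < n)%N ->
  emp_rademacher (F_unc phi Lam) xs <= Lam * B * Num.sqrt d%:R / Num.sqrt n%:R.
Proof.
move=> HB Lam0 n0.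
have B0 : 0 <= B by apply: le_trans (HB 0); apply: frob_ge0.
set N := #|{ffun 'I_n * 'I_d -> bool}|.
have cardN : (2 ^ (n * d))%N = N by rewrite /N card_ffun card_bool card_prod !card_ord.
have Npos : (0 < N%:R :> R) by rewrite -cardN ltr0n expn_gt0.
pose X (s : {ffun 'I_n * 'I_d -> bool}) (j : 'I_d) (l : 'I_k) :=
  \sum_(i < n) sgnb R (s (i, j)) * phi (xs i) 0 l.
pose G s := Num.sqrt (\sum_j \sum_l X s j l ^+ 2).
have C0 : 0 <= d%:R * (n%:R * B ^+ 2) :> R by apply: mulr_ge0 => //; apply: mulr_ge0 => //; apply: sqr_ge0.
have ne : forall s : {ffun 'I_n * 'I_d -> bool},
   [set (\sum_(i < n) \sum_(j < d) sgnb R (s (i, j)) * f (xs i) 0 j) | f in F_unc phi Lam] !=set0.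
  move=> s; eexists; exists (fun x => phi x *m (0 : 'M[R]_(d, k))^T) => //.
  by exists 0; split => //; rewrite frob0 ltW.
have ub : forall (s : {ffun 'I_n * 'I_d -> bool}) x,
   [set (\sum_(i < n) \sum_(j < d) sgnb R (s (i, j)) * f (xs i) 0 j) | f in F_unc phi Lam] x ->
   x <= Lam * G s.
  move=> s x [f [W [HW ->]] <-].
  have -> : \sum_(i < n) \sum_(j < d) sgnb R (s (i, j)) * (phi (xs i) *m W^T) 0 j
          = \sum_j \sum_l W j l * X s j l.
    transitivity (\sum_(i < n) \sum_(j < d) \sum_(l < k) W j l * (sgnb R (s (i, j)) * phi (xs i) 0 l)).
      apply: eq_bigr => i _; apply: eq_bigr => j _; rewrite !mxE big_distrr /=.
      apply: eq_bigr => l _; rewrite !mxE; ring.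
    rewrite exchange_big /=; apply: eq_bigr => j _.
    rewrite exchange_big /=; apply: eq_bigr => l _.
    by rewrite /X big_distrr.
  apply: le_trans (CS2 _ _) _.
  apply: ler_wpM2r; first exact: sqrtr_ge0.
  exact: HW.
have HC : \sum_s G s ^+ 2 <= N%:R * (d%:R * (n%:R * B ^+ 2)).
  have E : \sum_s G s ^+ 2 = \sum_(j < d) \sum_(l < k) (N%:R * \sum_i phi (xs i) 0 l ^+ 2).
    transitivity (\sum_s \sum_j \sum_l X s j l ^+ 2).
      apply: eq_bigr => s _; rewrite /G sqr_sqrtr //.
      by apply: sumr_ge0 => j _; apply: sumr_ge0 => l _; apply: sqr_ge0.
    rewrite exchange_big /=; apply: eq_bigr => j _.
    rewrite exchange_big /=; apply: eq_bigr => l _.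
    transitivity (\sum_(s : {ffun 'I_n * 'I_d -> bool})
      (\sum_p sgnb R (s p) * (if p.2 == j then phi (xs p.1) 0 l else 0)) ^+ 2).
      apply: eq_bigr => s _; congr (_ ^+ 2).
      rewrite pairE /=.
      apply: eq_bigr => i _; rewrite (bigD1 j) //= eqxx big1 ?addr0 // => j' /negPf ->.
      by rewrite mulr0.
    rewrite rad_sq -/N; congr (_ * _).
    rewrite pairE /=.
    apply: eq_bigr => i _; rewrite (bigD1 j) //= eqxx big1 ?addr0 // => j' /negPf ->.
    by rewrite expr2 mulr0.
  rewrite E.
  apply: (le_trans (y := \sum_(j < d) (N%:R * (n%:R * B ^+ 2)))).
    apply: ler_sum => j _; rewrite -big_distrr /= ler_wpM2l //.
    rewrite exchange_big /=.
    apply: (le_trans (y := \sum_(i < n) B ^+ 2)); last by rewrite sum_const_ord.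
    apply: ler_sum => i _.
    have h := sq_le (frob_ge0 _) (HB (xs i)); rewrite frob_sq big_ord1 in h; exact: h.
  by rewrite sum_const_ord mulrCA.
have H := avg_bound ne ub (ltW Lam0) C0 HC.
rewrite /emp_rademacher cardN.
apply: (le_trans (y := n%:R^-1 * (N%:R^-1 * (N%:R * (Lam * Num.sqrt (d%:R * (n%:R * B ^+ 2))))))).
  apply: ler_wpM2l; first by rewrite invr_ge0.
  apply: ler_wpM2l; first by rewrite invr_ge0 ltW.
  exact: H.
rewrite mulKf ?gt_eqF // sqrtrM // sqrtrM // sqrtr_sqr ger0_norm //.
have sn : 0 < Num.sqrt (n%:R : R) by rewrite sqrtr_gt0 ltr0n.
have nE : (n%:R : R) = Num.sqrt (n%:R : R) ^+ 2 by rewrite sqr_sqrtr.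
rewrite [in X in X^-1 * _]nE.
rewrite le_eqVlt; apply/orP; left; apply/eqP.
field; exact: lt0r_neq0.
Qed.

Lemma cons_part (R : realType) (d k n : nat) (phi : 'rV[R]_d -> 'rV[R]_k)
  (L Lam : R) (xs : 'I_n -> 'rV[R]_d) :
  (forall x, frob (Jac phi x) <= L) -> 0 < Lam -> (0 < n)%N ->
  emp_rademacher (F_cons phi Lam) xs <= Lam * L / Num.sqrt n%:R.
Proof.
move=> HL Lam0 n0.
have L0 : 0 <= L by apply: le_trans (HL 0); apply: frob_ge0.
set N := #|{ffun 'I_n * 'I_d -> bool}|.
have cardN : (2 ^ (n * d))%N = N by rewrite /N card_ffun card_bool card_prod !card_ord.
have Npos : (0 < N%:R :> R) by rewrite -cardN ltr0n expn_gt0.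
pose X (s : {ffun 'I_n * 'I_d -> bool}) (o : 'I_1) (l : 'I_k) :=
  \sum_(i < n) \sum_(j < d) sgnb R (s (i, j)) * Jac phi (xs i) l j.
pose G s := Num.sqrt (\sum_o \sum_l X s o l ^+ 2).
have C0 : 0 <= n%:R * L ^+ 2 :> R by apply: mulr_ge0 => //; apply: sqr_ge0.
have ne : forall s : {ffun 'I_n * 'I_d -> bool},
   [set (\sum_(i < n) \sum_(j < d) sgnb R (s (i, j)) * f (xs i) 0 j) | f in F_cons phi Lam] !=set0.
  move=> s; eexists; exists (fun x => (0 : 'rV[R]_k) *m Jac phi x) => //.
  by exists 0; split => //; rewrite frob0 ltW.
have ub : forall (s : {ffun 'I_n * 'I_d -> bool}) x,
   [set (\sum_(i < n) \sum_(j < d) sgnb R (s (i, j)) * f (xs i) 0 j) | f in F_cons phi Lam] x ->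
   x <= Lam * G s.
  move=> s x [f [w [Hw ->]] <-].
  have -> : \sum_(i < n) \sum_(j < d) sgnb R (s (i, j)) * (w *m Jac phi (xs i)) 0 j
          = \sum_o \sum_l w o l * X s o l.
    symmetry; rewrite big_ord1.
    under eq_bigr do rewrite big_distrr /=.
    under eq_bigr do under eq_bigr do rewrite big_distrr /=.
    rewrite exchange_big /=; apply: eq_bigr => i _.
    rewrite exchange_big /=; apply: eq_bigr => j _.
    rewrite !mxE big_distrr /=; apply: eq_bigr => l _.
    have o0 : (0 : 'I_1) = ord0 by apply: val_inj.
    rewrite o0; ring.
  apply: le_trans (CS2 _ _) _.
  apply: ler_wpM2r; first exact: sqrtr_ge0.
  exact: Hw.
have HC : \sum_s G s ^+ 2 <= N%:R * (n%:R * L ^+ 2).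
  have E : \sum_s G s ^+ 2 = \sum_(o < 1) \sum_(l < k)
      (N%:R * \sum_(p : 'I_n * 'I_d) Jac phi (xs p.1) l p.2 ^+ 2).
    transitivity (\sum_s \sum_o \sum_l X s o l ^+ 2).
      apply: eq_bigr => s _; rewrite /G sqr_sqrtr //.
      by apply: sumr_ge0 => j _; apply: sumr_ge0 => l _; apply: sqr_ge0.
    rewrite exchange_big /=; apply: eq_bigr => o _.
    rewrite exchange_big /=; apply: eq_bigr => l _.
    transitivity (\sum_(s : {ffun 'I_n * 'I_d -> bool})
      (\sum_p sgnb R (s p) * Jac phi (xs p.1) l p.2) ^+ 2).
      apply: eq_bigr => s _; congr (_ ^+ 2).
      by rewrite pairE.
    by rewrite rad_sq -/N.
  rewrite E big_ord1 -big_distrr /= ler_wpM2l //.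
  under eq_bigr do rewrite pairE.
  rewrite exchange_big /=.
  apply: (le_trans (y := \sum_(i < n) L ^+ 2)); last by rewrite sum_const_ord.
  apply: ler_sum => i _.
  have h := sq_le (frob_ge0 _) (HL (xs i)); rewrite frob_sq in h; exact: h.
have H := avg_bound ne ub (ltW Lam0) C0 HC.
rewrite /emp_rademacher cardN.
apply: (le_trans (y := n%:R^-1 * (N%:R^-1 * (N%:R * (Lam * Num.sqrt (n%:R * L ^+ 2)))))).
  apply: ler_wpM2l; first by rewrite invr_ge0.
  apply: ler_wpM2l; first by rewrite invr_ge0 ltW.
  exact: H.
rewrite mulKf ?gt_eqF // sqrtrM // sqrtr_sqr ger0_norm //.
have sn : 0 < Num.sqrt (n%:R : R) by rewrite sqrtr_gt0 ltr0n.
have nE : (n%:R : R) = Num.sqrt (n%:R : R) ^+ 2 by rewrite sqr_sqrtr.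
rewrite [in X in X^-1 * _]nE.
rewrite le_eqVlt; apply/orP; left; apply/eqP.
field; exact: lt0r_neq0.
Qed.

Unset Implicit Arguments. Set Strict Implicit.

Theorem theorem3p6 (R : realType) (d k n : nat) (phi : 'rV[R]_d -> 'rV[R]_k)
  (B L Lam : R) (xs : 'I_n -> 'rV[R]_d) :
  (forall x, differentiable phi x) ->
  (forall x, frob (phi x) <= B) ->
  (forall x, frob (Jac phi x) <= L) ->
  0 < Lam -> (0 < n)%N ->
  emp_rademacher (F_unc phi Lam) xs <= Lam * B * Num.sqrt d%:R / Num.sqrt n%:R /\
  emp_rademacher (F_cons phi Lam) xs <= Lam * L / Num.sqrt n%:R.
Proof.
move=> _ HB HL Lam0 n0; split.
- exact: unc_part.
- exact: cons_part.
Qed.
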